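(* Let $\mathcal H$ be a finite-dimensional Hilbert space, $|\theta\rangle\in\mathcal H$ a pure state, and $n,m,r$ nonnegative integers with $r+m\le n$. If $\varrho_n\in\mathrm{conv}(|\theta\rangle^{[\otimes,n,r]})$, then $\varrho_{n-m}=\mathrm{Tr}_m(\varrho_n)$, the reduced density matrix obtained by tracing out any $m$ of the $n$ systems, belongs to $\mathrm{conv}(|\theta\rangle^{[\otimes,n-m,r]})$.
   Context: For $0\le r\le N$, let $\mathrm{Sym}(\mathcal H^{\otimes N})$ be the symmetric subspace of $\mathcal H^{\otimes N}$, and let $\mathcal V(\mathcal H^{\otimes N},|\theta\rangle^{\otimes N-r})=\{\pi(|\theta\rangle^{\otimes N-r}\otimes|\psi_r\rangle):\pi\in S_N,\ |\psi_r\rangle\in\mathcal H^{\otimes r}\}$, where $S_N$ acts by permuting the $N$ tensor factors. The almost power states along $|\theta\rangle$ are the pure states in $|\theta\rangle^{[\otimes,N,r]}:=\mathrm{Sym}(\mathcal H^{\otimes N})\cap\mathrm{span}(\mathcal V(\mathcal H^{\otimes N},|\theta\rangle^{\otimes N-r}))$, and $\mathrm{conv}(|\theta\rangle^{[\otimes,N,r]})$ denotes the set of mixtures (convex combinations of the projectors) of such states. *)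

(* Defs.v *)
(* H = C^d over an algebraically closed numeric field C
   (e.g. the complex numbers). H^{(x)N} is modelled as functions on
   index tuples {ffun 'I_N -> 'I_d}. *)
From HB Require Import structures.
From mathcomp Require Import all_boot all_order all_algebra all_fingroup.
Unset Printing Implicit Defensive.
Import Order.TTheory GRing.Theory Num.Theory.
Local Open Scope ring_scope.

Notation idx d N := {ffun 'I_N -> 'I_d}.
Notation vecT C d N := {ffun idx d N -> C}.
Notation op C d N := {ffun idx d N * idx d N -> C}.

Section QDefs.
Variable C : numClosedFieldType.
Variable d : nat.
Local Notation idx N := (idx d N).
Local Notation vec N := (vecT C d N).
Local Notation op N := (op C d N).

Definition is_pure {N} (v : vec N) : Prop := \sum_i `|v i| ^+ 2 = 1.

Definition permV {N} (s : 'S_N) (v : vec N) : vec N :=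
  [ffun i : idx N => v [ffun k => i (s k)]].

(* |theta>^{(x) K} (x) |psi_r>  as a vector of H^{(x)(K+r)} *)
Definition tensV {K r} (theta : {ffun 'I_d -> C}) (psi : vec r) : vec (K + r) :=
  [ffun i : idx (K + r) =>
     (\prod_(k < K) theta (i (lshift r k))) *
     psi [ffun j : 'I_r => i (rshift K j)]].

Definition castV {M N} (e : M = N) (w : vec M) : vec N :=
  [ffun i : idx N => w [ffun k => i (cast_ord e k)]].

(* V(H^{(x)N}, |theta>^{(x)N-r}) : pi(|theta>^{(x)N-r} (x) |psi_r>), pi in S_N
   (nonempty only when r <= N, with K = N - r) *)
Definition Vset N r (theta : {ffun 'I_d -> C}) (v : vec N) : Prop :=
  exists (K : nat) (e : (K + r)%N = N) (s : 'S_N) (psi : vec r),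
    v = permV s (castV e (tensV theta psi)).

Definition in_span {N} (P : vec N -> Prop) (v : vec N) : Prop :=
  exists (k : nat) (c : 'I_k -> C) (w : 'I_k -> vec N),
    (forall j, P (w j)) /\ v = [ffun i => \sum_(j < k) c j * w j i].

Definition symmetric {N} (v : vec N) : Prop := forall s : 'S_N, permV s v = v.

Definition almost_power_space N r theta (v : vec N) : Prop :=
  symmetric v /\ in_span (Vset N r theta) v.

Definition almost_power_state N r theta (v : vec N) : Prop :=
  is_pure v /\ almost_power_space N r theta v.

Definition proj {N} (v : vec N) : op N :=
  [ffun ij : idx N * idx N => v ij.1 * (v ij.2)^*].

Definition in_conv_apw N r theta (rho : op N) : Prop :=
  exists (k : nat) (p : 'I_k -> C) (v : 'I_k -> vec N),
    (forall j, 0 <= p j) /\ \sum_(j < k) p j = 1 /\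
    (forall j, almost_power_state N r theta (v j)) /\
    rho = [ffun ij => \sum_(j < k) p j * proj (v j) ij].

(* partial trace: f : 'I_M -> 'I_N (injective) lists the kept systems;
   all systems outside the image of f are traced out. *)
Definition ptrace {N M} (f : 'I_M -> 'I_N) (rho : op N) : op M :=
  [ffun ij : idx M * idx M =>
     \sum_(x : idx N | [forall k, x (f k) == ij.1 k])
      \sum_(y : idx N | [forall k, y (f k) == ij.2 k] &&
                        [forall p, (p \notin codom f) ==> (x p == y p)])
        rho (x, y)].

End QDefs.

(* Main.v *)
Require Import Defs.
From HB Require Import structures.
From mathcomp Require Import all_boot all_order all_algebra all_fingroup.
From mathcomp Require Import zify.
Import Order.TTheory GRing.Theory Num.Theory.
Local Open Scope ring_scope.

Section Proof.
Variable C : numClosedFieldType.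
Variable d : nat.
Local Notation idx N := (idx d N).
Local Notation vec N := (vecT C d N).

Definition Vgood N r (theta : {ffun 'I_d -> C}) (v : vec N) : Prop :=
  exists (A : {set 'I_N}) (g : idx N -> C),
    (#|~: A| <= r)%N /\
    (forall x y : idx N, (forall p, p \notin A -> x p = y p) -> g x = g y) /\
    forall x, v x = (\prod_(p in A) theta (x p)) * g x.

Lemma Vset_good N r theta (v : vec N) : Vset C d N r theta v -> Vgood N r theta v.
Proof.
case=> K [e [s [psi ->]]].
pose h := fun k : 'I_(K + r) => s (cast_ord e k).
have hinj : injective h by move=> a b /perm_inj /cast_ord_inj.
pose A := [set h (lshift r k) | k : 'I_K].
exists A, (fun x : idx N => psi [ffun j => x (h (rshift K j))]).
split; [|split].
- have cA : #|A| = K.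
    rewrite card_imset ?card_ord // => a b /hinj; exact: lshift_inj.
  have := cardsC A; rewrite cA card_ord => H.
  have e2 := e; move: e2 H; lia.
- move=> x y H; f_equal; apply/ffunP=> j; rewrite !ffunE; apply: H.
  apply/imsetP=> -[k _ /hinj /(congr1 val) /= Hk].
  by have := ltn_ord k; rewrite -Hk; lia.
- move=> x; rewrite /permV /castV /tensV !ffunE.
  rewrite big_imset /=; last by move=> a b _ _ /hinj; exact: lshift_inj.
  idtac.
  congr (_ * _).
  + apply: eq_bigr => k _; by rewrite !ffunE.
  + f_equal; apply/ffunP=> j; by rewrite !ffunE.
Qed.

Definition merge M N (f : 'I_M -> 'I_N) (z : idx N) (i : idx M) : idx N :=
  [ffun p => if [pick q | f q == p] is Some q then i q else z p].
Arguments merge {M N}.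

Lemma merge_f M N (f : 'I_M -> 'I_N) z i q : injective f -> merge f z i (f q) = i q.
Proof.
move=> hf; rewrite ffunE; case: pickP => [q' /eqP /hf -> //|/(_ q)].
by rewrite eqxx.
Qed.

Lemma merge_nf M N (f : 'I_M -> 'I_N) z i p : ~~ [exists q, f q == p] -> merge f z i p = z p.
Proof.
move=> /existsPn H; rewrite ffunE; case: pickP => [q' hq|//].
by have := H q'; rewrite hq.
Qed.

Lemma good_contract M N r theta (f : 'I_M -> 'I_N) (z : idx N) (v : vec N) :
  injective f -> Vgood N r theta v -> Vgood M r theta [ffun i => v (merge f z i)].
Proof.
move=> hf [A [g [cA [hg hv]]]].
pose A' := [set q | f q \in A].
exists A', (fun i => (\prod_(p in A | ~~ [exists q, f q == p]) theta (z p)) * g (merge f z i)).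
split; [|split].
- apply: leq_trans cA.
  rewrite -(card_imset _ hf); apply: subset_leq_card; apply/subsetP=> p /imsetP [q].
  by rewrite !inE => hq ->.
- move=> x y H; congr (_ * _); apply: hg => p hp.
  case: (boolP [exists q, f q == p]) => [/existsP [q /eqP hq]|hn].
  + rewrite -hq in hp *; rewrite !merge_f //; apply: H; by rewrite inE.
  + by rewrite (@merge_nf _ _ f z x p hn) (@merge_nf _ _ f z y p hn).
- move=> x; rewrite ffunE hv (bigID (fun p => [exists q, f q == p])) /= -mulrA.
  congr (_ * (_ * _)).
  + have -> : \prod_(q in A') theta (x q) = \prod_(q in A') theta (merge f z x (f q)).
      by apply: eq_bigr => q _; rewrite merge_f.
    rewrite -(@big_imset _ _ _ _ _ f A' (fun p => theta (merge f z x p))); last by move=> a b _ _ /hf.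
    apply: eq_bigl => p; apply/andP/imsetP.
    * by move=> [hp /existsP [q /eqP hq]]; exists q; rewrite // inE hq.
    * by move=> [q]; rewrite inE => hq ->; split=> //; apply/existsP; exists q.
  + by apply: eq_bigr => p /andP [_ hn]; rewrite merge_nf.
Qed.

Lemma good_pad N r theta (v : vec N) : (r <= N)%N -> Vgood N r theta v ->
  exists (A : {set 'I_N}) (g : idx N -> C),
    (#|~: A| = r) /\
    (forall x y : idx N, (forall p, p \notin A -> x p = y p) -> g x = g y) /\
    forall x, v x = (\prod_(p in A) theta (x p)) * g x.
Proof.
move=> hrN [A [g [cA [hg hv]]]].
have cA2 := cardsC A; rewrite card_ord in cA2.
have cAle : (N - r <= #|A|)%N by lia.
pose A2 := [set p in take (N - r) (enum A)].
have cA2' : #|A2| = (N - r)%N.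
  rewrite cardsE; move/card_uniqP: (take_uniq (N - r) (enum_uniq (mem A))) => ->.
  by rewrite size_takel // -cardE.
have sA : A2 \subset A.
  by apply/subsetP=> p; rewrite inE => /mem_take; rewrite mem_enum.
exists A2, (fun x : idx N => (\prod_(p in A :\: A2) theta (x p)) * g x).
split; [|split].
- have := cardsC A2; rewrite card_ord cA2'; lia.
- move=> x y H; congr (_ * _).
  + apply: eq_bigr => p; rewrite inE => /andP [hp _]; by rewrite H.
  + apply: hg => p hp; apply: H; apply: contra hp; exact: (subsetP sA).
- move=> x; rewrite hv (@big_setID _ _ _ _ A A2) /= mulrA; congr (_ * _ * _).
  by move/setIidPr: sA => ->.
Qed.

Lemma good_exact N r (theta : {ffun 'I_d -> C}) (v : vec N) (a0 : 'I_d) (A : {set 'I_N}) (g : idx N -> C) :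
    (#|~: A| = r) ->
    (forall x y : idx N, (forall p, p \notin A -> x p = y p) -> g x = g y) ->
    (forall x, v x = (\prod_(p in A) theta (x p)) * g x) ->
  Vset C d N r theta v.
Proof.
move=> cA hg hv.
have eK : (#|A| + r)%N = N by have := cardsC A; rewrite card_ord cA.
pose S := enum A ++ enum (~: A).
have sS : size S = N.
  by rewrite size_cat -!cardE cA.
have uS : uniq S.
  rewrite cat_uniq !enum_uniq /= andbT; apply/hasPn => p.
  by rewrite !mem_enum inE.
pose h := fun p : 'I_N => nth p S p.
have hinj : injective h.
  move=> p q; rewrite /h.
  have -> : nth q S q = nth p S q by apply: set_nth_default; rewrite sS.
  by move/eqP; rewrite nth_uniq ?sS // ?ltn_ord => /eqP /val_inj.
exists #|A|, eK, (perm hinj).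
exists [ffun y : idx r => g [ffun p => if [pick j : 'I_r | nth p (enum (~: A)) j == p] is Some j then y j else a0]].
apply/ffunP => x; rewrite /permV /castV /tensV !ffunE hv.
congr (_ * _).
- rewrite big_enum_val; apply: eq_bigr => k _; rewrite !ffunE permE /h /=.
  rewrite nth_cat -cardE ltn_ord /enum_val; congr (theta (x _)).
  by apply: set_nth_default; rewrite -cardE.
- apply: hg => p hp; rewrite !ffunE.
  case: pickP => [j /eqP hj|hn].
  + rewrite !ffunE permE /h /= nth_cat -cardE ltnNge leq_addr /= addKn.
    rewrite (set_nth_default p) ?hj // -cardE cA //.
  + have hpi : p \in enum (~: A) by rewrite mem_enum inE.
    have hlt : (index p (enum (~: A)) < r)%N by rewrite -cA cardE index_mem.
    by have := hn (Ordinal hlt); rewrite /= nth_index ?eqxx.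
Qed.

Lemma Vset_contract M N r theta (f : 'I_M -> 'I_N) (z : idx N) (v : vec N) (a0 : 'I_d) :
  injective f -> (r <= M)%N -> Vset C d N r theta v ->
  Vset C d M r theta [ffun i => v (merge f z i)].
Proof.
move=> hf hrM /Vset_good /(@good_contract M N r theta f z v hf) /(@good_pad M r theta _ hrM) [A [g [cA [hg hv]]]].
exact: (@good_exact M r theta _ a0 A g cA hg hv).
Qed.

Lemma aps_scale N r theta (u : vec N) (c : C) :
  almost_power_space C d N r theta u ->
  almost_power_space C d N r theta [ffun i => c * u i].
Proof.
move=> [hs [k [cc [w [hw hu]]]]]; split.
- move=> s; apply/ffunP=> i; rewrite !ffunE.
  by move: (hs s) => /ffunP /(_ i); rewrite ffunE => ->.
- exists k, (fun j => c * cc j), w; split=> //.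
  apply/ffunP=> i; rewrite hu !ffunE mulr_sumr; apply: eq_bigr => j _.
  by rewrite mulrA.
Qed.

Definition liftp M N (f : 'I_M -> 'I_N) (s : 'S_M) (p : 'I_N) : 'I_N :=
  if [pick q | f q == p] is Some q then f (s q) else p.
Arguments liftp {M N}.

Lemma liftp_inj M N (f : 'I_M -> 'I_N) (s : 'S_M) : injective f -> injective (liftp f s).
Proof.
move=> hf p1 p2; rewrite /liftp.
case: pickP => [q1 /eqP h1|n1]; case: pickP => [q2 /eqP h2|n2].
- by move/hf/perm_inj => e; rewrite -h1 -h2 e.
- by move=> e; have := n2 (s q1); rewrite e eqxx.
- by move=> e; have := n1 (s q2); rewrite -e eqxx.
- by [].
Qed.

Lemma merge_perm M N (f : 'I_M -> 'I_N) (s : 'S_M) z (i : idx M) (hf : injective f) :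
  merge f z [ffun k => i (s k)] = [ffun k => merge f z i (perm (@liftp_inj M N f s hf) k)].
Proof.
apply/ffunP=> p; rewrite [LHS]ffunE [RHS]ffunE permE /liftp.
case: pickP => [q /eqP hq|hn].
- by rewrite merge_f // ffunE.
- by rewrite ffunE; case: pickP => [q hq|//]; have := hn q; rewrite hq.
Qed.

Lemma aps_contract M N r theta (f : 'I_M -> 'I_N) (z : idx N) (v : vec N) (a0 : 'I_d) :
  injective f -> (r <= M)%N -> almost_power_space C d N r theta v ->
  almost_power_space C d M r theta [ffun i => v (merge f z i)].
Proof.
move=> hf hrM [hs [k [cc [w [hw hu]]]]]; split.
- move=> s; apply/ffunP=> i; rewrite !ffunE merge_perm.
  by move: (hs (perm (@liftp_inj M N f s hf))) => /ffunP /(_ (merge f z i)); rewrite ffunE => ->.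
- exists k, cc, (fun j => [ffun i => w j (merge f z i)]); split.
  + move=> j; exact: (@Vset_contract M N r theta f z _ a0 hf hrM (hw j)).
  + by apply/ffunP=> i; rewrite hu !ffunE; apply: eq_bigr => j _; rewrite ffunE.
Qed.

Lemma sum_enum (T : finType) (F : T -> C) : \sum_(a < #|T|) F (enum_val a) = \sum_t F t.
Proof. by rewrite -big_enum_val; apply: eq_bigl => x; rewrite inE. Qed.

Lemma mix (T : finType) N r theta (w : T -> vec N) :
  (forall t, almost_power_space C d N r theta (w t)) ->
  \sum_t \sum_i `|w t i| ^+ 2 = 1 ->
  in_conv_apw C d N r theta [ffun ij => \sum_t proj C d (w t) ij].
Proof.
move=> hw h1.
pose nrm t := \sum_i `|w t i| ^+ 2.
have nrm0 t : 0 <= nrm t by apply: sumr_ge0 => i _; rewrite exprn_ge0.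
pose sq t := sqrtC (nrm t).
have sq0 t : 0 <= sq t by rewrite sqrtC_ge0.
have sqK t : sq t ^+ 2 = nrm t by rewrite sqrtCK.
pose nz t := [ffun i => (sq t)^-1 * w t i].
have key t : nrm t != 0 -> nrm t * (sq t)^-1 * (sq t)^-1 = 1.
  move=> hn; rewrite -mulrA -invfM -expr2 sqK divff //.
have st t : nrm t != 0 -> almost_power_state C d N r theta (nz t).
  move=> hn; split; last exact: aps_scale.
  rewrite /is_pure.
  under eq_bigr => i _ do rewrite ffunE normrM exprMn ger0_norm ?invr_ge0 //.
  by rewrite -mulr_sumr -/(nrm t) exprVn sqK mulVf.
have [t0 ht0] : exists t0, nrm t0 != 0.
  apply/existsP; apply: contraT; rewrite negb_exists => /forallP H.
  move: h1; rewrite (eq_bigr (fun _ => 0)) ?big1 // => [/eqP|t _].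
  - by rewrite eq_sym oner_eq0.
  - by move: (H t); rewrite negbK => /eqP.
pose v t := if nrm t != 0 then nz t else nz t0.
exists #|T|, (fun a => nrm (enum_val a)), (fun a => v (enum_val a)).
split; [|split; [|split]].
- by move=> a.
- by rewrite sum_enum.
- move=> a; rewrite /v; case: ifP => [hn|_]; exact: st.
- apply/ffunP=> ij; rewrite !ffunE (@sum_enum T (fun t => nrm t * proj C d (v t) ij)).
  apply: eq_bigr => t _; rewrite /v /proj !ffunE.
  case: (boolP (nrm t != 0)) => hn.
  + rewrite !ffunE rmorphM /= (geC0_conj (x := (sq t)^-1)) ?invr_ge0 //.
    by rewrite mulrACA !mulrA key // mul1r.
  + move: hn; rewrite negbK => /eqP hn.
    have w0 i : w t i = 0.
      apply/eqP; rewrite -normr_eq0 -sqrf_eq0; apply/eqP.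
      by apply: (psumr_eq0P _ hn) => // j _; rewrite exprn_ge0.
    by rewrite hn mul0r w0 mul0r.
Qed.

Section Merge.
Variables (M N : nat) (f : 'I_M -> 'I_N) (hf : injective f) (a0 : 'I_d).

Lemma codomE p : (p \in codom f) = [exists q, f q == p].
Proof.
apply/codomP/existsP => [[q ->]|[q /eqP <-]]; by exists q.
Qed.

Definition zero (z : idx N) := merge f z [ffun _ => a0].

Lemma merge_case (P : 'I_N -> Prop) p :
  (forall q, p = f q -> P (f q)) -> (~~ [exists q, f q == p] -> P p) -> P p.
Proof.
move=> h1 h2; case: (boolP [exists q, f q == p]) => [/existsP [q /eqP hq]|hn].
- rewrite -hq; exact: (h1 q (esym hq)).
- exact: h2.
Qed.

Lemma merge_zero (x : idx N) (i : idx M) :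
  [forall k, x (f k) == i k] -> merge f (zero x) i = x.
Proof.
move=> /forallP H; apply/ffunP=> p; apply: (@merge_case (fun p => merge f (zero x) i p = x p)).
- by move=> q _; rewrite merge_f //; apply/esym/eqP.
- by move=> hn; rewrite !merge_nf.
Qed.

Lemma zero_merge (z : idx N) (i : idx M) : zero (merge f z i) = zero z.
Proof.
apply/ffunP=> p; apply: (@merge_case (fun p => zero (merge f z i) p = zero z p)).
- by move=> q _; rewrite /zero !merge_f.
- by move=> hn; rewrite /zero !merge_nf.
Qed.

Lemma merge_merge (z : idx N) (i j : idx M) : merge f (merge f z i) j = merge f z j.
Proof.
apply/ffunP=> p; apply: (@merge_case (fun p => merge f (merge f z i) j p = merge f z j p)).
- by move=> q _; rewrite !merge_f.
- by move=> hn; rewrite !merge_nf.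
Qed.

Lemma merge_self (x : idx N) (i : idx M) :
  [forall k, x (f k) == i k] -> merge f x i = x.
Proof.
move=> /forallP H; apply/ffunP=> p; apply: (@merge_case (fun p => merge f x i p = x p)).
- by move=> q _; rewrite merge_f //; apply/esym/eqP.
- by move=> hn; rewrite !merge_nf.
Qed.

Lemma ptraceE (rho : op C d N) (i j : idx M) :
  ptrace C d f rho (i, j) =
  \sum_(x : idx N | [forall k, x (f k) == i k]) rho (x, merge f x j).
Proof.
rewrite ffunE /=; apply: eq_bigr => x hx; apply: big_pred1 => y /=.
apply/andP/eqP.
- move=> [/forallP H1 /forallP H2]; apply/ffunP => p.
  apply: (@merge_case (fun p => y p = merge f x j p)).
  + by move=> q _; rewrite merge_f //; apply/eqP.
  + move=> hn; rewrite merge_nf //; apply/esym/eqP.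
    by move: (H2 p); rewrite codomE hn.
- move=> ->; split; apply/forallP.
  + by move=> k; rewrite merge_f.
  + move=> p; apply/implyP; rewrite codomE => hn; by rewrite merge_nf.
Qed.

Lemma reind (F : idx N -> C) (i : idx M) :
  \sum_(x : idx N | [forall k, x (f k) == i k]) F x =
  \sum_(z : idx N | zero z == z) F (merge f z i).
Proof.
rewrite (reindex_onto (fun z => merge f z i) zero); last by move=> x hx; apply: merge_zero.
apply: eq_bigl => z; rewrite zero_merge; suff -> : [forall k, merge f z i (f k) == i k] by [].
by apply/forallP => k; rewrite merge_f.
Qed.
End Merge.

Lemma main (theta : {ffun 'I_d -> C}) (n m r : nat) (hrmn : (r + m <= n)%N)
  (htheta : \sum_i `|theta i| ^+ 2 = 1)
  (rho : op C d n) (hrho : in_conv_apw C d n r theta rho)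
  (f : 'I_(n - m) -> 'I_n) (hf : injective f) :
  in_conv_apw C d (n - m) r theta (ptrace C d f rho).
Proof.
have hd : (0 < d)%N.
  case: (posnP d) => // d0; move: htheta; rewrite big1 => [/eqP|i _].
  - by rewrite eq_sym oner_eq0.
  - by have := ltn_ord i; rewrite {2}d0.
pose a0 := Ordinal hd.
case: hrho => k [p [v [hp [hs [hv ->]]]]].
pose w (t : 'I_k * idx n) := [ffun i : idx (n - m) =>
  (if zero _ _ f a0 t.2 == t.2 then sqrtC (p t.1) else 0) *
  [ffun i => v t.1 (merge f t.2 i)] i].
have hrM : (r <= n - m)%N by lia.
have hw t : almost_power_space C d (n - m) r theta (w t).
  exact: (aps_scale _ _ _ _ _ (@aps_contract _ _ r theta f t.2 _ a0 hf hrM (hv t.1).2)).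
clear rho; set rho := [ffun ij => _].
have E : ptrace C d f rho = [ffun ij => \sum_t proj C d (w t) ij].
  apply/ffunP => -[i j]; rewrite ptraceE // (@reind _ _ f hf a0) ffunE.
  rewrite -(pair_bigA _ (fun (l : 'I_k) (z : idx n) => proj C d (w (l, z)) (i, j))) /= exchange_big /= big_mkcond /=.
  apply: eq_bigr => z _; rewrite ffunE /= merge_merge //.
  case: ifP => hz.
  - apply: eq_bigr => l _; rewrite /proj !ffunE /= hz rmorphM /=.
    rewrite (geC0_conj (x := sqrtC (p l))) ?sqrtC_ge0 //.
    by rewrite mulrACA -expr2 sqrtCK.
  - by rewrite big1 // => l _; rewrite /proj !ffunE /= hz !mul0r.
rewrite E; apply: mix => //.
transitivity (\sum_i ptrace C d f rho (i, i)).
  rewrite E exchange_big /=; apply: eq_bigr => i _; rewrite ffunE.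
  by apply: eq_bigr => t _; rewrite normCK /proj [RHS]ffunE.
transitivity (\sum_(x : idx n) rho (x, x)).
  rewrite (partition_big (fun x : idx n => [ffun k => x (f k)]) predT) //=.
  apply: eq_bigr => i _.
  rewrite ptraceE //.
  apply: eq_big => [x|x hx]; last by rewrite merge_self.
  apply/forallP/eqP => [H|H q].
  - by apply/ffunP => q; rewrite ffunE; apply/eqP/H.
  - by rewrite -H ffunE.
rewrite /rho.
under eq_bigr => x _ do rewrite ffunE.
rewrite exchange_big /= -hs; apply: eq_bigr => l _.
rewrite -[RHS]mulr1 -(hv l).1 mulr_sumr; apply: eq_bigr => x _.
by rewrite /proj ffunE normCK.
Qed.
End Proof.

Theorem lemma1 (C : numClosedFieldType) (d : nat) (theta : {ffun 'I_d -> C})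
  (n m r : nat) (hrmn : (r + m <= n)%N)
  (htheta : \sum_i `|theta i| ^+ 2 = 1)
  (rho : op C d n) (hrho : in_conv_apw C d n r theta rho)
  (f : 'I_(n - m) -> 'I_n) (hf : injective f) :
  in_conv_apw C d (n - m) r theta (ptrace C d f rho).
Proof.
exact: (@main C d theta n m r hrmn htheta rho hrho f hf).
Qed.
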